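(* Let $R$ be an associative ring with identity and involution $*$, and let $a\in R^{\#}\cap R^{\dagger}$. Then $a\in R^{SEP}$ if and only if $a^2a^*a^{\#}\in PE(R)$.
   Context: An involution on $R$ is a map $x\mapsto x^*$ with $(x^* )^*=x$, $(x+y)^*=x^*+y^*$, $(xy)^*=y^*x^*$. An element $a$ is Moore–Penrose invertible if there is $b$ with $aba=a$, $bab=b$, $(ab)^*=ab$, $(ba)^*=ba$; such $b$ is unique, denoted $a^{\dagger}$, and $R^{\dagger}$ is the set of such $a$. An element $a$ is group invertible if there is $b$ with $aba=a$, $bab=b$, $ab=ba$; such $b$ is unique, denoted $a^{\#}$, and $R^{\#}$ is the set of such $a$. $PE(R)=\{e\in R: e^2=e=e^*\}$ is the set of projections. For $a\in R^{\#}\cap R^{\dagger}$, $a$ is SEP if $a^*=a^{\dagger}=a^{\#}$; $R^{SEP}$ denotes the set of SEP elements. *)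

(* Defs.v *)
From mathcomp Require Import all_boot all_algebra.
Set Implicit Arguments. Unset Strict Implicit. Unset Printing Implicit Defensive.
Import GRing.Theory.
Local Open Scope ring_scope.

Definition involution (R : pzRingType) (star : R -> R) : Prop :=
  [/\ forall x, star (star x) = x,
      forall x y, star (x + y) = star x + star y &
      forall x y, star (x * y) = star y * star x].

Definition is_mp_inverse (R : pzRingType) (star : R -> R) (a b : R) : Prop :=
  [/\ a * b * a = a, b * a * b = b, star (a * b) = a * b & star (b * a) = b * a].

Definition is_group_inverse (R : pzRingType) (a b : R) : Prop :=
  [/\ a * b * a = a, b * a * b = b & a * b = b * a].

Definition mp_invertible (R : pzRingType) (star : R -> R) (a : R) : Prop :=
  exists b, is_mp_inverse star a b.
Definition group_invertible (R : pzRingType) (a : R) : Prop :=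
  exists b, is_group_inverse a b.

Definition projection (R : pzRingType) (star : R -> R) (e : R) : Prop :=
  e * e = e /\ e = star e.

(* SEP: a^* = a^dagger = a^#, where ad is a's MP inverse and ag its group inverse. *)
Definition SEP_wrt (R : pzRingType) (star : R -> R) (a ad ag : R) : Prop :=
  star a = ad /\ ad = ag.

(* Main.v *)
Require Import Defs.
From mathcomp Require Import all_boot all_algebra.
Local Open Scope ring_scope.
Import GRing.Theory.

Lemma mp_unique (R : pzRingType) (star : R -> R) (a b c : R) :
  involution star -> is_mp_inverse star a b -> is_mp_inverse star a c -> b = c.
Proof.
move=> [sK sD sM] [b1 b2 b3 b4] [c1 c2 c3 c4].
have Hb : b = b * (star b * star a) by rewrite -sM b3 mulrA b2.
have Hc : c = star a * star c * c by rewrite -sM c4 c2.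
have L1 : star a = star a * (a * c).
  by rewrite -c3 -sM c1.
have L2 : star a = (b * a) * star a by rewrite -b4 -sM mulrA b1.
have E1 : b = b * a * c.
  by rewrite {1}Hb L1 (mulrA (star b)) -sM b3 mulrA (mulrA b a b) b2 mulrA.
have E2 : c = b * a * c.
  by rewrite {1}Hc L2 -(mulrA (b * a)) -sM c4 -!mulrA (mulrA c a c) c2.
by rewrite E1 -E2.
Qed.

Theorem corollary2p7 (R : pzRingType) (star : R -> R) (a ag ad : R) :
  involution star ->
  is_group_inverse a ag ->
  is_mp_inverse star a ad ->
  (SEP_wrt star a ad ag <-> projection star (a ^+ 2 * star a * ag)).
Proof.
move=> inv [g1 g2 g3] [d1 d2 d3 d4].
have inv' := inv; case: inv' => [sK sD sM].
have Fg : ag = a * ag * ag by rewrite -{1}g2 g3.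
have Fa : ag * a * a = a by rewrite -g3 g1.
split.
  move=> [Hs Hg]; rewrite Hs -Hg.
  have E : a ^+ 2 * ad * ad = a * ad.
    have C : a * ad = ad * a by rewrite Hg g3.
    by rewrite expr2 -!mulrA (mulrA a ad ad) C d2.
  by rewrite E; split; [rewrite -mulrA (mulrA ad) d2 | rewrite d3].
move=> [Pi Ph].
have F2 : (star a) * a * ad = (star a) by rewrite -mulrA -d3 -sM d1.
have F3 : (star a) * star ad = ad * a by rewrite -sM d4.
have Fa1 : forall x, ag * (a * (a * x)) = a * x by move=> x; rewrite !mulrA Fa.
have Fa2 : ag * (a * a) = a by rewrite mulrA Fa.
have F2' : forall x, x * ((star a) * (a * ad)) = x * (star a).
  by move=> x; rewrite (mulrA (star a) a ad) F2.
have d1' : a * (ad * a) = a by rewrite mulrA d1.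
have St1 : a * ((star a) * (a * ((star a) * ag))) = a * ((star a) * ag).
  have := congr1 (fun x => ag * x) Pi.
  by rewrite /= expr2 -!mulrA !Fa1.
have St2 : a * ((star a) * (a * ((star a) * a))) = a * ((star a) * a).
  have := congr1 (fun x => x * (a * a)) St1.
  by rewrite /= -!mulrA Fa2.
have St3 : a * ((star a) * (a * (star a))) = a * (star a).
  have := congr1 (fun x => x * ad) St2.
  by rewrite /= -!mulrA !F2'.
have PI : a * ((star a) * a) = a.
  have := congr1 (fun x => x * star ad) St3.
  by rewrite /= -!mulrA F3 !d1'.
have Hs : ad = (star a).
  apply: (@mp_unique R star a ad (star a) inv) => //.
  split.
  - by rewrite -mulrA PI.
  - by have := congr1 star PI; rewrite /= sM sM sK.
  - by rewrite sM sK.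
  - by rewrite sM sK.
have E1 : a * ad * ag = ag.
  by rewrite {1}Fg !mulrA d1 -Fg.
have Ee : a ^+ 2 * star a * ag = a * ag.
  by rewrite -Hs expr2 -(mulrA a a ad) -(mulrA a (a * ad)) E1.
rewrite Ee in Ph.
have Hg : ad = ag.
  apply: (@mp_unique R star a ad ag inv) => //.
  split => //.
  by rewrite -g3 -Ph.
by split; [rewrite -Hs | ].
Qed.
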